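(* Let $T, L, \ell$ be positive integers and let $\underline{C}, \overline{C}, \overline{V}, V$ be real numbers. Let $\mathcal{TK}=\{(t,k): t\in[1,T]_{\mathbb{Z}},\ k\in[\min\{t+L-1,T\},T]_{\mathbb{Z}}\}$. Consider the polytope $P$ in the variables $\alpha_t$ ($t\in[1,T]_{\mathbb{Z}}$), $\beta_{tk}$ ($(t,k)\in\mathcal{TK}$), $\gamma_{tk}$ ($t\in[L,T-\ell-1]_{\mathbb{Z}}$, $k\in[t+\ell+1,T]_{\mathbb{Z}}$), $\theta_t$ ($t\in[T-\ell,T]_{\mathbb{Z}}$) and $q^s_{tk}$ ($(t,k)\in\mathcal{TK}$, $s\in[t,k]_{\mathbb{Z}}$) defined by \begin{align*} &\textstyle\sum_{t=1}^{T}\alpha_t\le 1,\\ &\textstyle -\alpha_t+\sum_{k=t+L-1}^{T}\beta_{tk}-\sum_{k=L}^{t-\ell-1}\gamma_{kt}=0, && \forall t\in[1,T]_{\mathbb{Z}},\\ &\textstyle -\sum_{k=1}^{t-L+1}\beta_{kt}+\sum_{k=t+\ell+1}^{T}\gamma_{tk}\le 0, && \forall t\in[L,T-\ell-1]_{\mathbb{Z}},\\ &\textstyle \theta_t-\sum_{k=1}^{t-L+1}\beta_{kt}=0, && \forall t\in[T-\ell,T]_{\mathbb{Z}},\\ &\underline{C}\beta_{tk}\le q^s_{tk}\le \overline{C}\beta_{tk}, && \forall s\in[t,k]_{\mathbb{Z}},\ (t,k)\in\mathcal{TK},\\ &q^t_{tk}\le \overline{V}\beta_{tk}, && \forall (t,k)\in\mathcal{TK},\\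 &q^k_{tk}\le \overline{V}\beta_{tk}, && \forall (t,k)\in\mathcal{TK} \text{ with } k\le T-1,\\ &q^{s-1}_{tk}-q^s_{tk}\le V\beta_{tk},\quad q^{s}_{tk}-q^{s-1}_{tk}\le V\beta_{tk}, && \forall s\in[t+1,k]_{\mathbb{Z}},\ (t,k)\in\mathcal{TK},\\ &\alpha,\beta,\gamma\ge 0. \end{align*} (Empty sums are zero.) Then every extreme point of $P$ has all of its $\alpha,\beta,\gamma,\theta$ coordinates in $\{0,1\}$.
   Context: For integers $a\le b$, $[a,b]_{\mathbb{Z}}=\{a,a+1,\dots,b\}$. In the paper's model, $T$ is the number of time periods, $L$ and $\ell$ are the minimum-up and minimum-down time limits of a generator, $\underline{C},\overline{C}$ its generation lower/upper bounds, $\overline{V}$ its start-up/shut-down ramp rate and $V$ its ramp rate. *)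

(* Defs.v *)
From HB Require Import structures.
From mathcomp Require Import all_boot all_order all_algebra.
From mathcomp Require Import reals.
Set Implicit Arguments. Unset Strict Implicit. Unset Printing Implicit Defensive.
Import Order.TTheory GRing.Theory Num.Theory.
Local Open Scope ring_scope.

(* Coordinates are indexed by naturals:
   al t = alpha_t, be t k = beta_{tk}, ga t k = gamma_{tk}, th t = theta_t,
   q t k s = q^s_{tk}.  Only indices in the index sets below are genuine
   variables; membership in P forces all other coordinates to be 0. *)
Record point (R : realType) := Point {
  al : nat -> R;
  be : nat -> nat -> R;
  ga : nat -> nat -> R;
  th : nat -> R;
  qq : nat -> nat -> nat -> R }.

Definition inA (T t : nat) : bool := (1 <= t <= T)%N.
Definition inTK (T L t k : nat) : bool :=
  (1 <= t <= T)%N && (minn (t + L - 1) T <= k <= T)%N.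
Definition inG (T L l t k : nat) : bool :=
  (L <= t <= T - l - 1)%N && (t + l + 1 <= k <= T)%N.
Definition inTh (T l t : nat) : bool := (T - l <= t <= T)%N.
Definition inQ (T L t k s : nat) : bool := inTK T L t k && (t <= s <= k)%N.

Definition inP (R : realType) (T L l : nat) (Cl Cu Vb V : R) (x : point R) : Prop :=
  [/\
   [/\ forall t, ~~ inA T t -> al x t = 0,
       forall t k, ~~ inTK T L t k -> be x t k = 0,
       forall t k, ~~ inG T L l t k -> ga x t k = 0,
       forall t, ~~ inTh T l t -> th x t = 0 &
       forall t k s, ~~ inQ T L t k s -> qq x t k s = 0],
   [/\ \sum_(1 <= t < T.+1) al x t <= 1,
   forall t, inA T t ->
     - al x t + \sum_(t + L - 1 <= k < T.+1) be x t k
       - \sum_(L <= k < t - l) ga x k t = 0,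
   forall t, (L <= t <= T - l - 1)%N ->
     - \sum_(1 <= k < t.+2 - L) be x k t + \sum_(t + l + 1 <= k < T.+1) ga x t k <= 0 &
   forall t, (T - l <= t <= T)%N ->
     th x t - \sum_(1 <= k < t.+2 - L) be x k t = 0] &
   [/\
     forall t k s, inTK T L t k -> (t <= s <= k)%N ->
       Cl * be x t k <= qq x t k s /\ qq x t k s <= Cu * be x t k,
     forall t k, inTK T L t k -> qq x t k t <= Vb * be x t k,
     forall t k, inTK T L t k -> (k <= T - 1)%N -> qq x t k k <= Vb * be x t k,
     forall t k s, inTK T L t k -> (t + 1 <= s <= k)%N ->
       qq x t k (s - 1) - qq x t k s <= V * be x t k /\
       qq x t k s - qq x t k (s - 1) <= V * be x t k &
     [/\ forall t, inA T t -> 0 <= al x t,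
         forall t k, inTK T L t k -> 0 <= be x t k &
         forall t k, inG T L l t k -> 0 <= ga x t k]]].

Definition is_comb (R : realType) (lam : R) (x y z : point R) : Prop :=
  [/\ forall t, al x t = lam * al y t + (1 - lam) * al z t,
      forall t k, be x t k = lam * be y t k + (1 - lam) * be z t k,
      forall t k, ga x t k = lam * ga y t k + (1 - lam) * ga z t k,
      forall t, th x t = lam * th y t + (1 - lam) * th z t &
      forall t k s, qq x t k s = lam * qq y t k s + (1 - lam) * qq z t k s].

Definition pt_eq (R : realType) (y z : point R) : Prop :=
  [/\ forall t, al y t = al z t,
      forall t k, be y t k = be z t k,
      forall t k, ga y t k = ga z t k,
      forall t, th y t = th z t &
      forall t k s, qq y t k s = qq z t k s].

Definition extreme_point (R : realType) (T L l : nat) (Cl Cu Vb V : R) (x : point R) : Prop :=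
  inP T L l Cl Cu Vb V x /\
  forall (y z : point R) (lam : R),
    inP T L l Cl Cu Vb V y -> inP T L l Cl Cu Vb V z ->
    0 < lam < 1 -> is_comb lam x y z -> pt_eq y z.

Definition is01 (R : realType) (a : R) : Prop := a = 0 \/ a = 1.

(* Main.v *)
Require Import Defs.
From HB Require Import structures.
From mathcomp Require Import all_boot all_order all_algebra.
From mathcomp Require Import reals ring lra zify.
Import Order.TTheory GRing.Theory Num.Theory.
Local Open Scope ring_scope.

Section Helpers.
Variable R : realType.

Lemma sum_ind (m n j : nat) (c : R) :
  \sum_(m <= i < n) (if i == j then c else 0) = if (m <= j < n)%N then c else 0.
Proof.
elim: n => [|n IH]; first by rewrite big_geq // ltn0 andbF.
case: (leqP m n) => hmn.
  rewrite big_nat_recr //= IH.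
  case: (ltngtP j n) => h.
  - by rewrite andbT addr0 ltnS (ltnW h) andbT.
  - rewrite andbF addr0.
    have -> : (j < n.+1)%N = false by apply/negbTE; rewrite -leqNgt.
    by rewrite andbF.
  - by subst j; rewrite andbF add0r ltnSn andbT hmn.
rewrite big_geq //.
by have -> : (m <= j < n.+1)%N = false by apply/negbTE/negP => /andP[? ?]; lia.
Qed.

Lemma sum0 (m n : nat) (F : nat -> R) :
  (forall i, (m <= i < n)%N -> F i = 0) -> \sum_(m <= i < n) F i = 0.
Proof. by move=> H; rewrite big_nat_cond big1 // => i /andP[hi _]; exact: H. Qed.

Lemma sum_pos (m n : nat) (F : nat -> R) :
  0 < \sum_(m <= i < n) F i -> exists i, (m <= i < n)%N /\ 0 < F i.
Proof.
elim: n => [|n IH]; first by rewrite big_geq // ltxx.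
case: (leqP m n) => hmn; last by rewrite big_geq // ltxx.
rewrite big_nat_recr //= => H.
case: (ltrP 0 (F n)) => h.
  by exists n; split => //; apply/andP; split.
have : 0 < \sum_(m <= i < n) F i by lra.
move/IH => [i [/andP[h1 h2] h3]]; exists i; split => //; apply/andP; split => //; lia.
Qed.

Lemma sum_nonneg (m n : nat) (F : nat -> R) :
  (forall j, (m <= j < n)%N -> 0 <= F j) -> 0 <= \sum_(m <= j < n) F j.
Proof.
move=> H; rewrite big_seq_cond; apply: sumr_ge0 => j /andP[hj _].
by apply: H; rewrite mem_index_iota in hj.
Qed.

Lemma le_sum_term (m n i : nat) (F : nat -> R) : (m <= i < n)%N ->
  (forall j, (m <= j < n)%N -> 0 <= F j) -> F i <= \sum_(m <= j < n) F j.
Proof.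
move=> hi H; rewrite (bigD1_seq i) ?mem_index_iota ?iota_uniq //= lerDl.
rewrite big_seq_cond; apply: sumr_ge0 => j /andP[hj _].
by apply: H; rewrite mem_index_iota in hj.
Qed.

Lemma sumlin (r : seq nat) (F G : nat -> R) (a c : R) :
  \sum_(i <- r) ((F i - a * G i) / c) = (\sum_(i <- r) F i - a * \sum_(i <- r) G i) / c.
Proof. by rewrite -mulr_suml sumrB mulr_sumr. Qed.

End Helpers.

Section Main.
Variables (R : realType) (T L l : nat) (Cl Cu Vb V : R).

Definition outB (b : nat -> nat -> R) t := \sum_(t + L - 1 <= k < T.+1) b t k.
Definition inGs (g : nat -> nat -> R) t := \sum_(L <= k < t - l) g k t.
Definition inB (b : nat -> nat -> R) t := \sum_(1 <= k < t.+2 - L) b k t.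
Definition outG (g : nat -> nat -> R) t := \sum_(t + l + 1 <= k < T.+1) g t k.

Definition FP (x y : point R) : Prop :=
  [/\ [/\ forall t, ~~ inA T t -> al y t = 0,
       forall t k, ~~ inTK T L t k -> be y t k = 0,
       forall t k, ~~ inG T L l t k -> ga y t k = 0 &
       forall t, ~~ inTh T l t -> th y t = 0],
   [/\ \sum_(1 <= t < T.+1) al y t <= 1,
   forall t, inA T t -> - al y t + outB (be y) t - inGs (ga y) t = 0,
   forall t, (L <= t <= T - l - 1)%N -> - inB (be y) t + outG (ga y) t <= 0 &
   forall t, (T - l <= t <= T)%N -> th y t - inB (be y) t = 0],
   [/\ forall t, inA T t -> 0 <= al y t,
         forall t k, inTK T L t k -> 0 <= be y t k &
         forall t k, inG T L l t k -> 0 <= ga y t k] &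
   forall t k, be x t k = 0 -> be y t k = 0].

Definition lift (x y : point R) : point R :=
  Point (al y) (be y) (ga y) (th y)
    (fun t k s => if be x t k == 0 then 0 else qq x t k s * (be y t k / be x t k)).

Lemma q0 x t k s : inP T L l Cl Cu Vb V x -> be x t k = 0 -> qq x t k s = 0.
Proof.
move=> [[_ _ _ _ Sq] _ [Hq _ _ _ _]] hb.
case hQ: (inQ T L t k s); last by apply: Sq; rewrite hQ.
move/andP: hQ => [h1 h2]; have [] := Hq t k s h1 h2; rewrite hb !mulr0 => ha hc.
by apply/eqP; rewrite eq_le hc ha.
Qed.

Lemma lift_inP x y : inP T L l Cl Cu Vb V x -> FP x y -> inP T L l Cl Cu Vb V (lift x y).
Proof.
move=> Hx [[Sa Sb Sg St] [F1 F2 F3 F4] [N1 N2 N3] Hc].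
have Hx' := Hx.
move: Hx => [[_ _ _ _ Sq] _ [Hq Hv1 Hv2 Hr [_ Nb _]]].
have key : forall t k, inTK T L t k ->
  (be x t k = 0 /\ be y t k = 0) \/
  (exists r, 0 <= r /\ be y t k = be x t k * r /\
     forall s, qq (lift x y) t k s = qq x t k s * r).
  move=> t k htk; case: (eqVneq (be x t k) 0) => hb.
    by left; split => //; apply: Hc.
  right; exists (be y t k / be x t k); split.
    by apply: divr_ge0; [apply: N2 | apply: Nb].
  split; first by rewrite mulrCA divff // mulr1.
  by move=> s /=; rewrite (negbTE hb).
split.
- split => //=.
  move=> t k s hQ; case: ifP => // _.
  by rewrite (Sq t k s hQ) mul0r.
- by split.
- split.
  + move=> t k s htk hs; case: (key t k htk) => [[h1 h2]|[r [hr [h1 h2]]]].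
      by rewrite /= h1 eqxx h2 !mulr0 lexx.
    rewrite h2 h1 !mulrA; have [a b] := Hq t k s htk hs.
    by split; apply: ler_wpM2r.
  + move=> t k htk; case: (key t k htk) => [[h1 h2]|[r [hr [h1 h2]]]].
      by rewrite /= h1 eqxx h2 !mulr0 lexx.
    by rewrite h2 h1 mulrA; apply: ler_wpM2r => //; apply: Hv1.
  + move=> t k htk hk; case: (key t k htk) => [[h1 h2]|[r [hr [h1 h2]]]].
      by rewrite /= h1 eqxx h2 !mulr0 lexx.
    by rewrite h2 h1 mulrA; apply: ler_wpM2r => //; apply: Hv2.
  + move=> t k s htk hs; case: (key t k htk) => [[h1 h2]|[r [hr [h1 h2]]]].
      by rewrite /= h1 eqxx h2 !mulr0 subrr lexx.
    rewrite !h2 h1 mulrA -!mulrBl; have [a b] := Hr t k s htk hs.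
    by split; apply: ler_wpM2r.
  + by split.
Qed.

Lemma lift_comb x y z lam : inP T L l Cl Cu Vb V x ->
  (forall t, al x t = lam * al y t + (1 - lam) * al z t) ->
  (forall t k, be x t k = lam * be y t k + (1 - lam) * be z t k) ->
  (forall t k, ga x t k = lam * ga y t k + (1 - lam) * ga z t k) ->
  (forall t, th x t = lam * th y t + (1 - lam) * th z t) ->
  is_comb lam x (lift x y) (lift x z).
Proof.
move=> Hx ha hb hg ht; split => //= t k s.
case: (eqVneq (be x t k) 0) => h; first by rewrite (q0 _ _ _ s Hx h) !mulr0 addr0.
move: h; rewrite hb => h; field.
exact: h.
Qed.

Lemma outB_lin b1 b2 a c t : outB (fun t k => (b1 t k - a * b2 t k)/c) t = (outB b1 t - a * outB b2 t)/c.
Proof. exact: sumlin. Qed.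
Lemma inGs_lin b1 b2 a c t : inGs (fun t k => (b1 t k - a * b2 t k)/c) t = (inGs b1 t - a * inGs b2 t)/c.
Proof. exact: sumlin. Qed.
Lemma inB_lin b1 b2 a c t : inB (fun t k => (b1 t k - a * b2 t k)/c) t = (inB b1 t - a * inB b2 t)/c.
Proof. exact: sumlin. Qed.
Lemma outG_lin b1 b2 a c t : outG (fun t k => (b1 t k - a * b2 t k)/c) t = (outG b1 t - a * outG b2 t)/c.
Proof. exact: sumlin. Qed.

Lemma core x p lam : extreme_point T L l Cl Cu Vb V x -> FP x p -> 0 < lam < 1 ->
  (forall t, inA T t -> lam * al p t <= al x t) ->
  (forall t k, inTK T L t k -> lam * be p t k <= be x t k) ->
  (forall t k, inG T L l t k -> lam * ga p t k <= ga x t k) ->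
  (forall t, (L <= t <= T - l - 1)%N ->
     lam * (inB (be p) t - outG (ga p) t) <= inB (be x) t - outG (ga x) t) ->
  \sum_(1 <= t < T.+1) al x t - lam * \sum_(1 <= t < T.+1) al p t <= 1 - lam ->
  [/\ forall t, al x t = al p t, forall t k, be x t k = be p t k,
      forall t k, ga x t k = ga p t k & forall t, th x t = th p t].
Proof.
move=> [Hx Hext] Hp /andP[l0 l1] Ca Cb Cg Cs Csum.
have c0 : 0 < 1 - lam by lra.
have c0' : 1 - lam != 0 by rewrite gt_eqF.
set z := Point (fun t => (al x t - lam * al p t) / (1 - lam))
   (fun t k => (be x t k - lam * be p t k) / (1 - lam))
   (fun t k => (ga x t k - lam * ga p t k) / (1 - lam))
   (fun t => (th x t - lam * th p t) / (1 - lam))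
   (fun _ _ _ => 0).
have Hx' := Hx.
move: Hx' => [[Sa Sb Sg St _] [F1 F2 F3 F4] [_ _ _ _ [N1 N2 N3]]].
move: (Hp) => [[Sa' Sb' Sg' St'] [F1' F2' F3' F4'] [N1' N2' N3'] Hc'].
have Hz : FP x z.
  split.
  - split => /= [t h|t k h|t k h|t h].
    + by rewrite Sa // Sa' // mulr0 subrr mul0r.
    + by rewrite Sb // Sb' // mulr0 subrr mul0r.
    + by rewrite Sg // Sg' // mulr0 subrr mul0r.
    + by rewrite St // St' // mulr0 subrr mul0r.
  - split => /=.
    + rewrite sumlin ler_pdivrMr // mul1r; lra.
    + move=> t ht; rewrite outB_lin inGs_lin.
      have e1 : - al x t + outB (be x) t - inGs (ga x) t = 0 := F2 t ht.
      have e2 := F2' t ht.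
      have -> : outB (be x) t = al x t + inGs (ga x) t by lra.
      have -> : outB (be p) t = al p t + inGs (ga p) t by lra.
      by field.
    + move=> t ht; rewrite inB_lin outG_lin.
      have -> : - ((inB (be x) t - lam * inB (be p) t) / (1 - lam)) +
          (outG (ga x) t - lam * outG (ga p) t) / (1 - lam) =
          ((outG (ga x) t - inB (be x) t) - lam * (outG (ga p) t - inB (be p) t)) / (1 - lam)
        by field.
      rewrite ler_pdivrMr // mul0r; have := Cs t ht; lra.
    + move=> t ht; rewrite inB_lin.
      have e1 : th x t - inB (be x) t = 0 := F4 t ht.
      have e2 := F4' t ht.
      have -> : th x t = inB (be x) t by lra.
      have -> : th p t = inB (be p) t by lra.
      by rewrite subrr.
  - split => /= [t h|t k h|t k h];
      (apply: divr_ge0; [rewrite subr_ge0 | exact: ltW c0]).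
    + exact: Ca.
    + exact: Cb.
    + exact: Cg.
  - move=> t k /= h; by rewrite h Hc' // mulr0 subrr mul0r.
have Hcomb : is_comb lam x (lift x p) (lift x z).
  apply: lift_comb => //= *; field => //.
have hl : 0 < lam < 1 by rewrite l0 l1.
have [E1 E2 E3 E4 _] := Hext _ _ lam (lift_inP _ _ Hx Hp) (lift_inP _ _ Hx Hz) hl Hcomb.
move: Hcomb => [G1 G2 G3 G4 _].
split => [t|t k|t k|t].
- by rewrite G1 -E1 /= -mulrDl subrKC mul1r.
- by rewrite G2 -E2 /= -mulrDl subrKC mul1r.
- by rewrite G3 -E3 /= -mulrDl subrKC mul1r.
- by rewrite G4 -E4 /= -mulrDl subrKC mul1r.
Qed.

Hypotheses (hL : (0 < L)%N) (hl : (0 < l)%N).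

Definition ind2 (u k : nat) : nat -> nat -> R :=
  fun t k' => if (t == u) && (k' == k) then 1 else 0.

Lemma sum_indF m n j (c : R) (F : nat -> R) : (forall i, F i = if i == j then c else 0) ->
  \sum_(m <= i < n) F i = if (m <= j < n)%N then c else 0.
Proof. by move=> H; rewrite (eq_bigr _ (fun i _ => H i)) sum_ind. Qed.

Lemma outB_ind u k t : (u + L - 1 <= k <= T)%N -> outB (ind2 u k) t = (t == u)%:R.
Proof.
move=> h; rewrite /outB /ind2; case: (eqVneq t u) => [->|ne].
  rewrite (sum_indF _ _ k (1:R)) => [|i]; last by [].
  by rewrite ifT //; apply/andP; split; lia.
by rewrite sum0.
Qed.

Lemma inB_ind u k t : (1 <= u)%N -> (u + L - 1 <= k)%N -> inB (ind2 u k) t = (t == k)%:R.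
Proof.
move=> h1 h2; rewrite /inB /ind2; case: (eqVneq t k) => [->|ne].
  rewrite (sum_indF _ _ u (1:R)) => [|i]; last by rewrite andbT.
  by rewrite ifT //; apply/andP; split; lia.
by rewrite sum0 // => i _; rewrite andbF.
Qed.

Lemma outG_ind k u t : (k + l + 1 <= u <= T)%N -> outG (ind2 k u) t = (t == k)%:R.
Proof.
move=> h; rewrite /outG /ind2; case: (eqVneq t k) => [->|ne].
  rewrite (sum_indF _ _ u (1:R)) => [|i]; last by [].
  by rewrite ifT //; apply/andP; split; lia.
by rewrite sum0.
Qed.

Lemma inGs_ind k u t : (L <= k)%N -> (k + l < u)%N -> inGs (ind2 k u) t = (t == u)%:R.
Proof.
move=> h1 h2; rewrite /inGs /ind2; case: (eqVneq t u) => [->|ne].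
  rewrite (sum_indF _ _ k (1:R)) => [|i]; last by rewrite andbT.
  by rewrite ifT //; apply/andP; split; lia.
by rewrite sum0 // => i _; rewrite andbF.
Qed.


Record PInv (x : point R) (u : nat) (b g : nat -> nat -> R) (eps : R) : Prop := {
 pb01 : forall t k, b t k = 0 \/ b t k = 1;
 pg01 : forall t k, g t k = 0 \/ g t k = 1;
 pbs : forall t k, b t k != 0 -> (u <= t)%N && (t + L - 1 <= k <= T)%N;
 pgs : forall t k, g t k != 0 -> inG T L l t k && (u <= t)%N;
 pcons : forall t, inA T t -> outB b t - inGs g t = (t == u)%:R;
 pdown : forall t, (L <= t <= T - l - 1)%N -> outG g t <= inB b t;
 pin01 : forall t, inB b t = 0 \/ inB b t = 1;
 peps : 0 < eps;
 pbx : forall t k, eps * b t k <= be x t k;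
 pgx : forall t k, eps * g t k <= ga x t k;
 pslack : forall t, (L <= t <= T - l - 1)%N ->
    eps * (inB b t - outG g t) <= inB (be x) t - outG (ga x) t }.

Arguments pb01 {x u b g eps}.
Arguments pg01 {x u b g eps}.
Arguments pbs {x u b g eps}.
Arguments pgs {x u b g eps}.
Arguments pcons {x u b g eps}.
Arguments pdown {x u b g eps}.
Arguments pin01 {x u b g eps}.
Arguments peps {x u b g eps}.
Arguments pbx {x u b g eps}.
Arguments pgx {x u b g eps}.
Arguments pslack {x u b g eps}.

Lemma outB_add b1 b2 t : outB (fun t k => b1 t k + b2 t k) t = outB b1 t + outB b2 t.
Proof. exact: big_split. Qed.
Lemma inGs_add b1 b2 t : inGs (fun t k => b1 t k + b2 t k) t = inGs b1 t + inGs b2 t.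
Proof. exact: big_split. Qed.
Lemma inB_add b1 b2 t : inB (fun t k => b1 t k + b2 t k) t = inB b1 t + inB b2 t.
Proof. exact: big_split. Qed.
Lemma outG_add b1 b2 t : outG (fun t k => b1 t k + b2 t k) t = outG b1 t + outG b2 t.
Proof. exact: big_split. Qed.
Lemma outG0 t : outG (fun _ _ => 0) t = 0.
Proof. exact: sum0. Qed.
Lemma inGs0 t : inGs (fun _ _ => 0) t = 0.
Proof. exact: sum0. Qed.

Lemma bx_ge0 x t k : inP T L l Cl Cu Vb V x -> 0 <= be x t k.
Proof.
move=> [[_ Sb _ _ _] _ [_ _ _ _ [_ Nb _]]].
case h: (inTK T L t k); first exact: Nb.
by rewrite Sb ?h.
Qed.

Lemma gx_ge0 x t k : inP T L l Cl Cu Vb V x -> 0 <= ga x t k.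
Proof.
move=> [[_ _ Sg _ _] _ [_ _ _ _ [_ _ Ng]]].
case h: (inG T L l t k); first exact: Ng.
by rewrite Sg ?h.
Qed.

Lemma slack_ge0 x t : inP T L l Cl Cu Vb V x -> (L <= t <= T - l - 1)%N ->
  0 <= inB (be x) t - outG (ga x) t.
Proof.
move=> [_ [_ _ F3 _] _] ht; have := F3 t ht.
rewrite -/(inB (be x) t) -/(outG (ga x) t); lra.
Qed.

Lemma stop_ok x u k eps : inP T L l Cl Cu Vb V x -> inA T u ->
  (u + L - 1 <= k <= T)%N -> 0 < eps -> eps <= be x u k ->
  ((L <= k <= T - l - 1)%N -> eps <= inB (be x) k - outG (ga x) k) ->
  PInv x u (ind2 u k) (fun _ _ => 0) eps.
Proof.
move=> Hx hu hk he hb hs; move/andP: hu => [hu1 hu2].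
split => //.
- by move=> t k0; rewrite /ind2; case: ifP; [right|left].
- by move=> *; left.
- move=> t k0; rewrite /ind2; case: ifP => [/andP[/eqP-> /eqP->] _|_]; last by rewrite eqxx.
  by rewrite leqnn.
- by move=> t k0; rewrite eqxx.
- by move=> t _; rewrite outB_ind // inGs0 subr0.
- move=> t _; rewrite outG0 inB_ind //; try lia.
- move=> t; rewrite inB_ind //; last lia.
  by case: (t == k); [right|left].
- move=> t k0; rewrite /ind2; case: ifP => [/andP[/eqP-> /eqP->]|_].
    by rewrite mulr1.
  by rewrite mulr0; apply: bx_ge0.
- by move=> t k0; rewrite mulr0; apply: gx_ge0.
- move=> t ht; rewrite outG0 subr0 inB_ind //; last lia.
  case: (eqVneq t k) => [e|ne].
    by subst t; rewrite mulr1; apply: hs.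
  by rewrite mulr0; apply: slack_ge0.
Qed.

Lemma path_ex x : inP T L l Cl Cu Vb V x -> forall n u, (T - u < n)%N -> inA T u ->
  0 < outB (be x) u -> exists b g eps, PInv x u b g eps.
Proof.
move=> Hx; have Hx' := Hx.
move: Hx' => [_ [_ F2 _ _] [_ _ _ _ [Na _ _]]].
elim=> [|n IH] u hn hu hpos; first by [].
have [k [hk hbk]] := @sum_pos R _ _ _ hpos.
move/andP: (hu) => [hu1 hu2].
have hk' : (u + L - 1 <= k <= T)%N by lia.
case hr: (L <= k <= T - l - 1)%N; last first.
  exists (ind2 u k), (fun _ _ => 0), (be x u k); apply: stop_ok => //.
  by rewrite hr.
case: (ltrP (outG (ga x) k) (inB (be x) k)) => hs.
  exists (ind2 u k), (fun _ _ => 0), (Num.min (be x u k) (inB (be x) k - outG (ga x) k)).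
  apply: stop_ok => //.
  - by rewrite lt_min hbk subr_gt0 hs.
  - by rewrite ge_min lexx.
  - by move=> _; rewrite ge_min lexx orbT.
have hinB : be x u k <= inB (be x) k.
  apply: (@le_sum_term R _ _ _ (fun j => be x j k)); first by apply/andP; split; lia.
  by move=> j _; apply: bx_ge0.
have : 0 < outG (ga x) k by apply: (lt_le_trans hbk); apply: (le_trans hinB).
move/(@sum_pos R) => [u' [hu' hgu']].
have hu'A : inA T u' by clear -hu'; apply/andP; split; lia.
have uu' : (u < u')%N by clear -hk' hu' hL hl; lia.
have uk : (u <= k)%N by clear -hk' hL; lia.
have Lk : (L <= k)%N by clear -hr; lia.
have klu' : (k + l < u')%N by clear -hu'; lia.
have hku' : (k + l + 1 <= u' <= T)%N by clear -hu'; apply/andP; split; lia.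
have hG : inG T L l k u' by rewrite /inG hr hku'.
have hUk : (u + L - 1 <= k)%N by clear -hk'; lia.
have hpos' : 0 < outB (be x) u'.
  have e : - al x u' + outB (be x) u' - inGs (ga x) u' = 0 := F2 u' hu'A.
  have ha := Na u' hu'A.
  have hg : ga x k u' <= inGs (ga x) u'.
    apply: (@le_sum_term R _ _ _ (fun j => ga x j u')); first by apply/andP; split; lia.
    by move=> j _; apply: gx_ge0.
  lra.
have [b' [g' [e' P']]] := IH u' ltac:(clear -hn uu' hu'; lia) hu'A hpos'.
have Z1 : b' u k = 0.
  case: (eqVneq (b' u k) 0) => // /(pbs P') /andP[h _]; clear -h uu'; lia.
have Z2 : g' k u' = 0.
  case: (eqVneq (g' k u') 0) => // /(pgs P') /andP[_ h]; clear -h klu'; lia.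
have Z3 : inB b' k = 0.
  apply: sum0 => j hj; case: (eqVneq (b' j k) 0) => // /(pbs P') /andP[h1 /andP[h2 _]]; clear -h1 h2 klu' hL; lia.
set eps := Num.min e' (Num.min (be x u k) (ga x k u')).
have m1 : eps <= e' by rewrite ge_min lexx.
have m2 : eps <= be x u k by rewrite ge_min ge_min lexx orbT.
have m3 : eps <= ga x k u' by rewrite ge_min ge_min lexx !orbT.
have m0 : 0 < eps by rewrite !lt_min (peps P') hbk hgu'.
exists (fun t k0 => ind2 u k t k0 + b' t k0), (fun t k0 => ind2 k u' t k0 + g' t k0), eps.
split => //.
- move=> t k0; rewrite /ind2; case: ifP => [/andP[/eqP-> /eqP->]|_].
    by rewrite Z1 addr0; right.
  by rewrite add0r; exact: (pb01 P').
- move=> t k0; rewrite /ind2; case: ifP => [/andP[/eqP-> /eqP->]|_].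
    by rewrite Z2 addr0; right.
  by rewrite add0r; exact: (pg01 P').
- move=> t k0; rewrite /ind2; case: ifP => [/andP[/eqP-> /eqP->] _|_].
    by rewrite leqnn hk'.
  rewrite add0r => /(pbs P') /andP[h1 h2].
  by rewrite h2 (leq_trans (ltnW uu') h1).
- move=> t k0; rewrite /ind2; case: ifP => [/andP[/eqP-> /eqP->] _|_].
    by rewrite hG uk.
  rewrite add0r => /(pgs P') /andP[h1 h2].
  by rewrite h1 (leq_trans (ltnW uu') h2).
- move=> t ht; rewrite outB_add inGs_add (outB_ind _ _ _ hk') (inGs_ind _ _ _ Lk klu').
  have := pcons P' t ht; lra.
- move=> t ht; rewrite outG_add inB_add (outG_ind _ _ _ hku') (inB_ind _ _ _ hu1 hUk).
  have := pdown P' t ht; lra.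
- move=> t; rewrite inB_add (inB_ind _ _ _ hu1 hUk).
  case: (eqVneq t k) => [->|ne].
    by right; rewrite Z3 addr0.
  by rewrite add0r; exact: (pin01 P').
- move=> t k0; rewrite /ind2; case: ifP => [/andP[/eqP-> /eqP->]|_].
    by rewrite Z1 addr0 mulr1.
  rewrite add0r; apply: le_trans (pbx P' t k0).
  by apply: ler_wpM2r => //; case: (pb01 P' t k0) => ->; rewrite ?ler01 ?lexx.
- move=> t k0; rewrite /ind2; case: ifP => [/andP[/eqP-> /eqP->]|_].
    by rewrite Z2 addr0 mulr1.
  rewrite add0r; apply: le_trans (pgx P' t k0).
  by apply: ler_wpM2r => //; case: (pg01 P' t k0) => ->; rewrite ?ler01 ?lexx.
- move=> t ht; rewrite inB_add outG_add (outG_ind _ _ _ hku') (inB_ind _ _ _ hu1 hUk).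
  have h1 := pslack P' t ht; have h2 := pdown P' t ht.
  apply: le_trans h1.
  have -> : (t == k)%:R + inB b' t - ((t == k)%:R + outG g' t) = inB b' t - outG g' t by ring.
  by apply: ler_wpM2r => //; lra.
Qed.

Lemma main_sec x : extreme_point T L l Cl Cu Vb V x ->
  [/\ forall t, inA T t -> is01 (al x t),
      forall t k, inTK T L t k -> is01 (be x t k),
      forall t k, inG T L l t k -> is01 (ga x t k) &
      forall t, inTh T l t -> is01 (th x t)].
Proof.
move=> Hext; have Hx := proj1 Hext.
have Hx' := Hx.
move: Hx' => [_ [F1 F2 F3 F4] [_ _ _ _ [N1 N2 N3]]].
case: (ltrP 0 (\sum_(1 <= t < T.+1) al x t)) => hs.
  have [u [hu hau]] := @sum_pos R _ _ _ hs.
  have huA : inA T u by rewrite /inA; clear -hu; apply/andP; split; lia.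
  have hpos : 0 < outB (be x) u.
    have e : - al x u + outB (be x) u - inGs (ga x) u = 0 := F2 u huA.
    have : 0 <= inGs (ga x) u by apply: sum_nonneg => j _; apply: gx_ge0.
    lra.
  have [b [g [eps P]]] := @path_ex x Hx T.+1 u ltac:(clear; lia) huA hpos.
  set p := Point (fun t => if t == u then 1 else 0) b g
     (fun t => if inTh T l t then inB b t else 0) (fun _ _ _ => 0).
  set m := Num.min eps (al x u).
  have m0 : 0 < m by rewrite lt_min (peps P) hau.
  have me : m <= eps by rewrite ge_min lexx.
  have ma : m <= al x u by rewrite ge_min lexx orbT.
  set lam := m / (1 + m).
  have l0 : 0 < lam by apply: divr_gt0 => //; lra.
  have l1 : lam < 1 by rewrite /lam ltr_pdivrMr; lra.
  have lm : lam <= m.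
    rewrite /lam ler_pdivrMr; last lra.
    have : 0 <= m * m by apply: mulr_ge0; lra.
    lra.
  have b01 := pb01 P; have g01 := pg01 P.
  have bge t k : 0 <= b t k by case: (b01 t k) => ->; rewrite ?ler01 ?lexx.
  have gge t k : 0 <= g t k by case: (g01 t k) => ->; rewrite ?ler01 ?lexx.
  have Hp : FP x p.
    split.
    - split => /=.
      + by move=> t ht; case: (eqVneq t u) => // e; subst t; rewrite huA in ht.
      + move=> t k ht; case: (eqVneq (b t k) 0) => // /(pbs P) /andP[h1 /andP[h2 h3]].
        exfalso; move/negP: ht; apply; rewrite /inTK.
        have h4 : (1 <= t)%N by clear -h1 hu; lia.
        have h5 : (t <= T)%N by clear -h2 h3 hL; lia.
        rewrite h4 h5 h3 /= andbT.
        by rewrite geq_min h2.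
      + move=> t k ht; case: (eqVneq (g t k) 0) => // /(pgs P) /andP[h1 _].
        by rewrite h1 in ht.
      + by move=> t ht; rewrite (negbTE ht).
    - split => /=.
      + by rewrite sum_ind ifT.
      + move=> t ht; have := pcons P t ht.
        by case: (eqVneq t u) => _ /=; rewrite ?mulr1n ?mulr0n => e; lra.
      + move=> t ht; have := pdown P t ht; lra.
      + by move=> t ht; rewrite /inTh ht subrr.
    - split => /=.
      + by move=> t _; case: ifP; rewrite ?ler01 ?lexx.
      + by move=> t k _.
      + by move=> t k _.
    - move=> t k /= h; case: (b01 t k) => // e.
      have := pbx P t k; rewrite e h mulr1 => h'.
      have := peps P; lra.
  have [E1 E2 E3 E4] : [/\ forall t, al x t = al p t, forall t k, be x t k = be p t k,
      forall t k, ga x t k = ga p t k & forall t, th x t = th p t].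
    apply: (@core x p lam) => //.
    - by rewrite l0 l1.
    - move=> t ht /=; case: (eqVneq t u) => [->|_]; first by rewrite mulr1; lra.
      by rewrite mulr0; apply: N1.
    - move=> t k _ /=; apply: le_trans (pbx P t k).
      by apply: ler_wpM2r => //; lra.
    - move=> t k _ /=; apply: le_trans (pgx P t k).
      by apply: ler_wpM2r => //; lra.
    - move=> t ht /=; apply: le_trans (pslack P t ht).
      by apply: ler_wpM2r; [have := pdown P t ht; lra | lra].
    - rewrite /= sum_ind ifT //; lra.
  split.
  - move=> t _; rewrite E1 /=; case: ifP => _; [right|left] => //.
  - by move=> t k _; rewrite E2.
  - by move=> t k _; rewrite E3.
  - by move=> t ht; rewrite E4 /= ht; exact: (pin01 P).
have hs0 : \sum_(1 <= t < T.+1) al x t = 0.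
  apply/eqP; rewrite eq_le hs /=; apply: sum_nonneg => t ht; apply: N1.
  by rewrite /inA.
set p := Point (fun _ => 0) (fun _ _ => 0) (fun _ _ => 0) (fun _ => 0) (fun _ _ _ => (0:R)).
have [E1 E2 E3 E4] : [/\ forall t, al x t = al p t, forall t k, be x t k = be p t k,
    forall t k, ga x t k = ga p t k & forall t, th x t = th p t].
  apply: (@core x p (1/2)) => //.
  - split.
    + by split.
    + split => /=.
      * by rewrite sum0 // ler01.
      * by move=> t _; rewrite /outB /inGs !sum0 //; lra.
      * by move=> t _; rewrite /inB /outG !sum0 //; lra.
      * by move=> t _; rewrite /inB sum0 //; lra.
    + by split.
    + by [].
  - lra.
  - by move=> t ht /=; rewrite mulr0; apply: N1.
  - by move=> t k _ /=; rewrite mulr0; apply: bx_ge0.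
  - by move=> t k _ /=; rewrite mulr0; apply: gx_ge0.
  - move=> t ht; have h := slack_ge0 x t Hx ht.
    have z1 : inB (be p) t = 0 by apply: sum0.
    have z2 : outG (ga p) t = 0 by apply: sum0.
    by rewrite z1 z2 subr0 mulr0.
  - have z : \sum_(1 <= t < T.+1) al p t = 0 by apply: sum0.
    rewrite hs0 z; lra.
split.
- by move=> t _; rewrite E1; left.
- by move=> t k _; rewrite E2; left.
- by move=> t k _; rewrite E3; left.
- by move=> t _; rewrite E4; left.
Qed.

End Main.

Theorem lemma1 (R : realType) (T L l : nat) (Cl Cu Vb V : R)
  (hT : (0 < T)%N) (hL : (0 < L)%N) (hl : (0 < l)%N) (x : point R) :
  extreme_point T L l Cl Cu Vb V x ->
  [/\ forall t, inA T t -> is01 (al x t),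
      forall t k, inTK T L t k -> is01 (be x t k),
      forall t k, inG T L l t k -> is01 (ga x t k) &
      forall t, inTh T l t -> is01 (th x t)].
Proof.
move=> H; exact: (main_sec _ _ _ _ _ _ _ _ hL hl _ H).
Qed.
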